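(* Let $\mathcal{M}_n$ be a sequence of closed subspaces of a Hilbert space $\mathcal{H}$ and let $\mathcal{M}$ be a subspace of $\mathcal{H}$. The following are equivalent: (i) $\mathcal{M}_n\to\mathcal{M}$; (ii) $P_{\mathcal{M}_n}P_{\mathcal{M}}\to P_{\mathcal{M}}$ in the strong operator topology, and there is no larger space $\mathcal{N}\supsetneq\mathcal{M}$ such that $P_{\mathcal{M}_n}P_{\mathcal{N}}\to P_{\mathcal{N}}$; (iii) $P_{\mathcal{M}_n}P_{\mathcal{M}}\to P_{\mathcal{M}}$ in the weak operator topology, and there is no larger space $\mathcal{N}\supsetneq\mathcal{M}$ such that $P_{\mathcal{M}_n}P_{\mathcal{N}}\to P_{\mathcal{N}}$.
   Context: For closed subspaces $\mathcal{M}_n$ of $\mathcal{H}$, $\mathcal{M}_n\to\mathcal{M}$ means $\mathcal{M}=\{f\in\mathcal{H}:\lim_n\operatorname{dist}(f,\mathcal{M}_n)=0\}$. $P_{\mathcal{K}}$ denotes the orthogonal projection onto a closed subspace $\mathcal{K}$. *)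

(* Defs.v *)
From HB Require Import structures.
From mathcomp Require Import all_boot all_order all_algebra.
From mathcomp Require Import reals.
From mathcomp.real_closed Require Import complex.
From Stdlib Require Import ClassicalEpsilon.
Set Implicit Arguments. Unset Strict Implicit. Unset Printing Implicit Defensive.
Import Order.TTheory GRing.Theory Num.Theory.
Local Open Scope ring_scope.

Section Hilbert.
Variable R : realType.
Notation C := (R[i])%C.

Record inner_product (V : lmodType C) := InnerProduct {
  ip :> V -> V -> C;
  ip_linear : forall (a : C) (x y z : V), ip (a *: x + y) z = a * ip x z + ip y z;
  ip_conj : forall x y : V, ip y x = (ip x y)^*;
  ip_ge0 : forall x : V, 0 <= ip x x;
  ip_eq0 : forall x : V, ip x x = 0 -> x = 0
}.

Variables (V : lmodType C) (ip : inner_product V).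

Definition hnorm (x : V) : C := sqrtC (ip x x).

Definition hconv (u : nat -> V) (l : V) : Prop :=
  forall e : C, 0 < e -> exists N, forall n, (N <= n)%N -> hnorm (u n - l) < e.

Definition sconv (u : nat -> C) (l : C) : Prop :=
  forall e : C, 0 < e -> exists N, forall n, (N <= n)%N -> `|u n - l| < e.

Definition hcauchy (u : nat -> V) : Prop :=
  forall e : C, 0 < e -> exists N, forall m n, (N <= m)%N -> (N <= n)%N ->
    hnorm (u m - u n) < e.

Definition complete_ip : Prop :=
  forall u : nat -> V, hcauchy u -> exists l, hconv u l.

Definition subspace (M : V -> Prop) : Prop :=
  M 0 /\ (forall (a : C) x y, M x -> M y -> M (a *: x + y)).

Definition closed_subspace (M : V -> Prop) : Prop :=
  subspace M /\ (forall u l, (forall n, M (u n)) -> hconv u l -> M l).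

(* orthogonal projection P_M x: the (unique, for closed M in a Hilbert space)
   p in M with x - p orthogonal to M *)
Definition proj (M : V -> Prop) (x : V) : V :=
  epsilon (inhabits (0 : V))
    (fun p => M p /\ forall y, M y -> ip (x - p) y = 0).

(* dist(f, M_n) -> 0, written out: for every e > 0, eventually
   inf_{g in M_n} ||f - g|| < e *)
Definition dist_to0 (Ms : nat -> V -> Prop) (f : V) : Prop :=
  forall e : C, 0 < e -> exists N, forall n, (N <= n)%N ->
    exists g, Ms n g /\ hnorm (f - g) < e.

Definition subspace_lim (Ms : nat -> V -> Prop) (M : V -> Prop) : Prop :=
  forall f, M f <-> dist_to0 Ms f.

Definition sot_conv (A : nat -> V -> V) (B : V -> V) : Prop :=
  forall x, hconv (fun n => A n x) (B x).

Definition wot_conv (A : nat -> V -> V) (B : V -> V) : Prop :=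
  forall x y, sconv (fun n => ip (A n x) y) (ip (B x) y).

Definition strict_sub (M N : V -> Prop) : Prop :=
  (forall x, M x -> N x) /\ exists x, N x /\ ~ M x.

End Hilbert.

(* Main.v *)
Require Import Defs.
From HB Require Import structures.
From mathcomp Require Import all_boot all_order all_algebra.
From mathcomp Require Import reals classical_sets.
From mathcomp.real_closed Require Import complex.
From mathcomp Require Import lra ring.
From Stdlib Require Import ClassicalEpsilon Classical.
Import Order.TTheory GRing.Theory Num.Theory.
Local Open Scope ring_scope.

Section Lib.
Variable R : realType.
Local Notation C := (R[i])%C.
Local Notation "x %:C" := (real_complex R x) : ring_scope.
Local Notation Re := (@complex.Re R).
Local Notation Im := (@complex.Im R).
Variables (V : lmodType C) (ip : inner_product V).

Lemma conjE (c : C) : c^* = (c^*)%C. Proof. by []. Qed.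
Lemma conjR (a : R) : (a%:C)^* = a%:C. Proof. by rewrite conjE conjc_real. Qed.

Lemma ipDl x y z : ip (x + y) z = ip x z + ip y z.
Proof. by rewrite -[x in LHS]scale1r ip_linear mul1r. Qed.
Lemma ip0l z : ip 0 z = 0.
Proof. have h := ipDl 0 0 z; rewrite addr0 in h.
by apply: (addrI (ip 0 z)); rewrite -h addr0. Qed.
Lemma ipZl a x z : ip (a *: x) z = a * ip x z.
Proof. by rewrite -[a *: x]addr0 ip_linear ip0l addr0. Qed.
Lemma ipNl x z : ip (- x) z = - ip x z.
Proof. by rewrite -scaleN1r ipZl mulN1r. Qed.
Lemma ipBl x y z : ip (x - y) z = ip x z - ip y z.
Proof. by rewrite ipDl ipNl. Qed.
Lemma ipDr x y z : ip x (y + z) = ip x y + ip x z.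
Proof. by rewrite ip_conj ipDl rmorphD /= -!ip_conj. Qed.
Lemma ipZr a x z : ip x (a *: z) = a^* * ip x z.
Proof. by rewrite ip_conj ipZl rmorphM /= -!ip_conj. Qed.
Lemma ip0r x : ip x 0 = 0.
Proof. by rewrite ip_conj ip0l conjE conjc0. Qed.
Lemma ipNr x z : ip x (- z) = - ip x z.
Proof. by rewrite -scaleN1r ipZr rmorphN1 mulN1r. Qed.
Lemma ipBr x y z : ip x (y - z) = ip x y - ip x z.
Proof. by rewrite ipDr ipNr. Qed.

Definition q (x : V) : R := Re (ip x x).
Definition nr (x : V) : R := Num.sqrt (q x).
Definition nc (c : C) : R := Num.sqrt (Re c ^+ 2 + Im c ^+ 2).

Lemma realE (c : C) : c \is Num.real -> c = (Re c)%:C.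
Proof. by move=> h; rewrite RRe_real. Qed.

Lemma ipxx x : ip x x = (q x)%:C.
Proof. by rewrite /q -realE // ger0_real // ip_ge0. Qed.
Lemma q_ge0 x : 0 <= q x.
Proof. by rewrite -ler0c -ipxx ip_ge0. Qed.
Lemma q_eq0 x : q x = 0 -> x = 0.
Proof. move=> h; apply: (@ip_eq0 _ _ ip); rewrite ipxx h //. Qed.
Lemma nr_ge0 x : 0 <= nr x. Proof. exact: sqrtr_ge0. Qed.
Lemma nr_sq x : nr x ^+ 2 = q x. Proof. by rewrite sqr_sqrtr // q_ge0. Qed.

Lemma sqrtCR (a : R) : 0 <= a -> sqrtC (a%:C) = (Num.sqrt a)%:C.
Proof.
move=> a0; rewrite -[a in LHS](sqr_sqrtr a0) rmorphXn sqrCK //.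
by rewrite ler0c sqrtr_ge0.
Qed.
Lemma hnormE x : hnorm ip x = (nr x)%:C.
Proof. by rewrite /hnorm ipxx sqrtCR // q_ge0. Qed.

Lemma normcE (c : C) : `|c| = (nc c)%:C.
Proof. by rewrite normc_def. Qed.
Lemma nc_ge0 c : 0 <= nc c. Proof. exact: sqrtr_ge0. Qed.
Lemma nc_sq c : (nc c ^+ 2)%:C = c * c^*.
Proof. by rewrite -normCK normcE rmorphXn. Qed.
Lemma Re_le_nc c : Re c <= nc c.
Proof.
rewrite /nc; case: (lerP (Re c) 0) => h; first by apply: (le_trans h); exact: sqrtr_ge0.
have {1}-> : Re c = Num.sqrt (Re c ^+ 2) by rewrite sqrtr_sqr ger0_norm // ltW.
by rewrite ler_sqrt ?addr_ge0 ?sqr_ge0 // lerDl sqr_ge0.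
Qed.
Lemma nc_eq0 c : nc c = 0 -> c = 0.
Proof. by move=> h; apply/eqP; rewrite -normr_eq0 normcE h. Qed.
Lemma ncN c : nc (- c) = nc c.
Proof. by rewrite /nc; case: c => a b /=; rewrite !sqrrN. Qed.
Lemma ncR (a : R) : nc (a%:C) = `|a|.
Proof. by rewrite /nc /= expr0n addr0 sqrtr_sqr. Qed.

Lemma posC (e : C) : 0 < e -> exists2 r : R, 0 < r & e = r%:C.
Proof.
rewrite ltcE => /andP[/eqP hi hr]; exists (Re e) => //.
have h0 : Im e = 0 by rewrite hi.
by rewrite [LHS]complexE h0 mulr0 addr0.
Qed.

Lemma qD x y : q (x + y) = q x + q y + 2 * Re (ip x y).
Proof.
apply: complexI; rewrite !rmorphD rmorphM /= rmorph_nat -addcJ -!ipxx.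
rewrite ipDl !ipDr [ip y x]ip_conj conjE; ring.
Qed.
Lemma ReN c : Re (- c) = - Re c. Proof. by case: c. Qed.
Lemma qN x : q (- x) = q x. Proof. by rewrite /q ipNl ipNr opprK. Qed.
Lemma qB x y : q (x - y) = q x + q y - 2 * Re (ip x y).
Proof. by rewrite qD qN ipNr ReN mulrN. Qed.
Lemma qZ a x : q (a *: x) = nc a ^+ 2 * q x.
Proof.
apply: complexI; rewrite rmorphM /= nc_sq -!ipxx ipZl ipZr; ring.
Qed.
Lemma nrZ a x : nr (a *: x) = nc a * nr x.
Proof. by rewrite /nr qZ sqrtrM ?sqr_ge0 // sqrtr_sqr ger0_norm // nc_ge0. Qed.
Lemma nrN x : nr (- x) = nr x. Proof. by rewrite /nr qN. Qed.
Lemma nrB x y : nr (x - y) = nr (y - x). Proof. by rewrite -nrN opprB. Qed.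
Lemma nr0 : nr 0 = 0.
Proof. by rewrite /nr /q ip0l /= sqrtr0. Qed.

Lemma key z y : 0 < q y ->
  q (z - (ip z y / (q y)%:C) *: y) = q z - nc (ip z y) ^+ 2 / q y.
Proof.
move=> hy; apply: complexI.
rewrite -(ipxx (z - _)) rmorphB rmorphM fmorphV /= nc_sq.
rewrite ipBl !ipBr !ipZl !ipZr [ip y z]ip_conj rmorphM fmorphV /= conjR !ipxx.
have : (q y)%:C != 0 by rewrite fmorph_eq0 gt_eqF.
move: (ip z y) => c hc; field; exact: hc.
Qed.
Lemma sq_le (a b : R) : 0 <= a -> 0 <= b -> a ^+ 2 <= b ^+ 2 -> a <= b.
Proof. move=> ha hb h; nra. Qed.
Lemma sq_lt (a b : R) : 0 <= a -> 0 <= b -> a ^+ 2 < b ^+ 2 -> a < b.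
Proof. move=> ha hb h; nra. Qed.

Lemma CS x y : nc (ip x y) <= nr x * nr y.
Proof.
case: (ltrP 0 (q y)) => hy.
  have := q_ge0 (x - (ip x y / (q y)%:C) *: y); rewrite key //.
  rewrite subr_ge0 ler_pdivrMr // => h.
  apply: sq_le; rewrite ?nc_ge0 ?mulr_ge0 ?nr_ge0 // exprMn !nr_sq.
  exact: h.
have -> : y = 0 by apply: q_eq0; apply/eqP; rewrite eq_le hy q_ge0.
by rewrite ip0r -[0 : C]/((0:R)%:C) ncR normr0 mulr_ge0 ?nr_ge0.
Qed.
Lemma Re_ip_le x y : Re (ip x y) <= nr x * nr y.
Proof. exact: le_trans (Re_le_nc _) (CS x y). Qed.
Lemma nrD x y : nr (x + y) <= nr x + nr y.
Proof.
apply: sq_le; rewrite ?addr_ge0 ?nr_ge0 // nr_sq qD sqrrD !nr_sq.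
have := Re_ip_le x y; lra.
Qed.
Lemma ltRC (a b : R) : (a%:C < b%:C) = (a < b). Proof. exact: ltcR. Qed.
Lemma ltRC0 (b : R) : (0 < b%:C) = (0 < b). Proof. exact: (ltcR 0 b). Qed.

Lemma hconvR u l : hconv ip u l <->
  forall r : R, 0 < r -> exists N, forall n, (N <= n)%N -> nr (u n - l) < r.
Proof.
split=> h.
  move=> r r0; have [|N HN] := h r%:C; first by rewrite ltRC0.
  by exists N => n /HN; rewrite hnormE ltRC.
move=> e /posC[r r0 ->]; have [N HN] := h r r0.
by exists N => n /HN; rewrite hnormE ltRC.
Qed.

Lemma hcauchyR u : hcauchy ip u <->
  forall r : R, 0 < r -> exists N, forall m n, (N <= m)%N -> (N <= n)%N -> nr (u m - u n) < r.
Proof.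
split=> h.
  move=> r r0; have [|N HN] := h r%:C; first by rewrite ltRC0.
  by exists N => m n hm hn; have := HN m n hm hn; rewrite hnormE ltRC.
move=> e /posC[r r0 ->]; have [N HN] := h r r0.
by exists N => m n hm hn; have := HN m n hm hn; rewrite hnormE ltRC.
Qed.

Lemma distR Ms f : dist_to0 ip Ms f <->
  forall r : R, 0 < r -> exists N, forall n, (N <= n)%N -> exists g, Ms n g /\ nr (f - g) < r.
Proof.
split=> h.
  move=> r r0; have [|N HN] := h r%:C; first by rewrite ltRC0.
  exists N => n /HN [g [Hg Hn]]; exists g; split => //.
  by move: Hn; rewrite hnormE ltRC.
move=> e /posC[r r0 ->]; have [N HN] := h r r0.
exists N => n /HN [g [Hg Hn]]; exists g; split => //.
by rewrite hnormE ltRC.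
Qed.

Lemma sconvR u l : sconv u l <->
  forall r : R, 0 < r -> exists N, forall n, (N <= n)%N -> nc (u n - l) < r.
Proof.
split=> h.
  move=> r r0; have [|N HN] := h r%:C; first by rewrite ltRC0.
  by exists N => n /HN; rewrite normcE ltRC.
move=> e /posC[r r0 ->]; have [N HN] := h r r0.
by exists N => n /HN; rewrite normcE ltRC.
Qed.

Lemma archi_inv (e : R) : 0 < e -> exists N, forall n, (N <= n)%N -> (n.+1%:R)^-1 < e.
Proof.
move=> e0; exists (Num.bound (e^-1)) => n hn.
rewrite invf_plt ?posrE ?ltr0Sn //.
apply: (lt_le_trans (archi_boundP _)); first by rewrite invr_ge0 ltW.
by rewrite ler_nat; apply: leq_trans hn _.
Qed.
Section Sub.
Variable N : V -> Prop.
Hypothesis HN : subspace N.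
Lemma subD a b : N a -> N b -> N (a + b).
Proof. by move=> ha hb; rewrite -[a]scale1r; apply: HN.2. Qed.
Lemma subZ c a : N a -> N (c *: a).
Proof. by move=> ha; rewrite -[_ *: _]addr0; apply: HN.2 => //; exact: HN.1. Qed.
Lemma subN a : N a -> N (- a).
Proof. by move=> ha; rewrite -scaleN1r; apply: subZ. Qed.
Lemma subB a b : N a -> N b -> N (a - b).
Proof. by move=> ha hb; apply: subD => //; apply: subN. Qed.
End Sub.
Arguments subD [N] HN [a b].
Arguments subZ [N] HN c [a].
Arguments subN [N] HN [a].
Arguments subB [N] HN [a b].

Lemma proj_ex N x : complete_ip ip -> closed_subspace ip N ->
  exists p, N p /\ forall y, N y -> ip (x - p) y = 0.
Proof.
move=> Hc [HN Ncl].
pose E : set R := fun r => exists g, N g /\ r = q (x - g).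
have hE : has_inf E.
  split; first by exists (q (x - 0)); exists 0; split => //; exact: HN.1.
  by exists 0 => r [g [_ ->]]; exact: q_ge0.
pose D := inf E.
have HD g : N g -> D <= q (x - g).
  by move=> Ng; apply: (ge_inf hE.2); exists g.
have D0 : 0 <= D.
  by apply: lb_le_inf; [exact: hE.1 | move=> r [g [_ ->]]; exact: q_ge0].
have Hadh k : exists g, N g /\ q (x - g) < D + (k.+1%:R)^-1.
  have hk : 0 < (k.+1%:R : R)^-1 by rewrite invr_gt0 ltr0Sn.
  have [e [g [Ng ->]] He] := inf_adherent hk hE.
  by exists g.
pose g k := epsilon (inhabits 0) (fun g => N g /\ q (x - g) < D + (k.+1%:R)^-1).
have Hg k : N (g k) /\ q (x - g k) < D + (k.+1%:R)^-1.
  exact: (epsilon_spec (inhabits 0) _ (Hadh k)).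
have Hcau k m : q (g m - g k) <= 2 * (k.+1%:R)^-1 + 2 * (m.+1%:R)^-1.
  pose a := x - g k; pose b := x - g m; pose w := x - 2^-1 *: (g k + g m).
  have Hw : N (2^-1 *: (g k + g m)) by apply: subZ => //; apply: subD => //; [exact: (Hg k).1|exact: (Hg m).1].
  have h2 : (2^-1 + 2^-1 : C) = 1 by rewrite [RHS](splitr 1) mul1r.
  have Hmid : 2^-1 *: (g k + g m) + 2^-1 *: (g k + g m) = g k + g m by rewrite -scalerDl h2 scale1r.
  have Hab : a + b = w + w by rewrite /a /b /w addrACA -opprD [RHS]addrACA -opprD Hmid.
  have Hba : a - b = g m - g k by rewrite /a /b opprB addrC addrA subrK.
  have P1 := qD a b; have P2 := qB a b.
  have P3 : q (w + w) = 4 * q w by rewrite qD /q; lra.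
  have := HD _ Hw; have := (Hg k).2; have := (Hg m).2.
  rewrite -/a -/b -/w -Hba; rewrite Hab in P1.
  move: (k.+1%:R^-1 : R) (m.+1%:R^-1 : R) => ik im; lra.
have Hcauchy : hcauchy ip g.
  apply/hcauchyR => r r0.
  have [K HK] := archi_inv _ (divr_gt0 (mulr_gt0 r0 r0) (ltr0Sn R 3)).
  exists K => m n hm hn.
  apply: sq_lt; rewrite ?nr_ge0 ?ltW // nr_sq.
  have := Hcau n m; have := HK m hm; have := HK n hn; rewrite expr2.
  move: (r * r) (m.+1%:R^-1 : R) (n.+1%:R^-1 : R) => rr im iN; lra.
have [p Hp] := Hc g Hcauchy.
have Np : N p by apply: (Ncl g) => // k; exact: (Hg k).1.
have Hmin : q (x - p) <= D.
  suff : nr (x - p) <= Num.sqrt D.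
    by move=> h; rewrite -nr_sq -(sqr_sqrtr D0) ler_pXn2r ?nnegrE ?nr_ge0 ?sqrtr_ge0.
  apply/ler_addgt0Pr => e e0.
  have [K1 HK1] := archi_inv _ (divr_gt0 (mulr_gt0 e0 e0) (ltr0Sn R 3)).
  have [K2 HK2] := (hconvR g p).1 Hp (e / 2) (divr_gt0 e0 (ltr0Sn R 1)).
  pose k := maxn K1 K2.
  have h1 := HK1 k (leq_maxl _ _); have h2 := HK2 k (leq_maxr _ _).
  have h3 := (Hg k).2.
  have hs := sqr_sqrtr D0; have hs0 := sqrtr_ge0 D.
  have h4 : nr (x - g k) < Num.sqrt D + e / 2.
    apply: sq_lt; [exact: nr_ge0 | by rewrite addr_ge0 // divr_ge0 // ltW | rewrite nr_sq].
    have : 0 <= Num.sqrt D * e by rewrite mulr_ge0 // ltW.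
    have -> : (Num.sqrt D + e / 2) ^+ 2 = D + Num.sqrt D * e + e * e / 4.
      by rewrite sqrrD hs; field.
    move: (Num.sqrt D * e) (e * e) (k.+1%:R^-1 : R) h1 h3 => a1 a2 a3; lra.
  have := nrD (x - g k) (g k - p); rewrite addrA subrK; lra.
exists p; split => // y Ny.
case: (ltrP 0 (q y)) => hy; last first.
  have -> : y = 0 by apply: q_eq0; apply/eqP; rewrite eq_le hy q_ge0.
  exact: ip0r.
pose t := ip (x - p) y / (q y)%:C.
have Nt : N (p + t *: y) by apply: subD => //; apply: subZ.
have := HD _ Nt; rewrite opprD addrA key //.
have hnc := nc_ge0 (ip (x - p) y).
move=> h; have : nc (ip (x - p) y) ^+ 2 / q y <= 0 by lra.
rewrite ler_pdivrMr // mul0r => h'.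
apply: nc_eq0; nra.
Qed.
Lemma proj_spec N x : complete_ip ip -> closed_subspace ip N ->
  N (proj ip N x) /\ forall y, N y -> ip (x - proj ip N x) y = 0.
Proof.
move=> Hc HN; rewrite /proj.
apply: (epsilon_spec (inhabits 0) (fun p => N p /\ forall y, N y -> ip (x - p) y = 0)).
exact: proj_ex.
Qed.

Lemma proj_id N f : subspace N -> N f -> proj ip N f = f.
Proof.
move=> HN Nf.
have [Np Hp] : N (proj ip N f) /\ forall y, N y -> ip (f - proj ip N f) y = 0.
  rewrite /proj; apply: (epsilon_spec (inhabits 0) (fun p => N p /\ forall y, N y -> ip (f - p) y = 0)).
  by exists f; split => // y _; rewrite subrr ip0l.
have h := Hp _ (subB HN Nf Np).
apply/eqP; rewrite eq_sym -subr_eq0; apply/eqP; apply: (@ip_eq0 _ _ ip); exact: h.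
Qed.

Lemma proj_min N f g : complete_ip ip -> closed_subspace ip N -> N g ->
  q (f - proj ip N f) <= q (f - g).
Proof.
move=> Hc HN Ng; have [Np Hp] := proj_spec N f Hc HN.
have -> : f - g = (f - proj ip N f) + (proj ip N f - g) by rewrite addrA subrK.
rewrite (qD (f - _) (_ - g)) (Hp _ (subB HN.1 Np Ng)).
by rewrite mulr0 addr0 lerDl q_ge0.
Qed.

Lemma proj_wot N f : complete_ip ip -> closed_subspace ip N ->
  (q (f - proj ip N f))%:C = ip f f - ip (proj ip N f) f.
Proof.
move=> Hc HN; have [Np Hp] := proj_spec N f Hc HN.
by rewrite -ipxx [ip (f - _) (f - _)]ipBr (Hp _ Np) subr0 ipBl.
Qed.
Section Main.
Variables (Ms : nat -> V -> Prop).
Hypothesis Hc : complete_ip ip.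
Hypothesis HMs : forall n, closed_subspace ip (Ms n).
Local Notation L := (dist_to0 ip Ms).

Lemma L_closed : closed_subspace ip L.
Proof.
split; first split.
- apply/distR => r r0; exists 0%N => n _; exists 0; split; first exact: (HMs n).1.1.
  by rewrite subrr nr0.
- move=> a x y /distR Hx /distR Hy; apply/distR => r r0.
  have r1 : 0 < r / 2 / (nc a + 1).
    by rewrite divr_gt0 ?divr_gt0 // ltr_wpDl ?nc_ge0.
  have r2 : 0 < r / 2 by rewrite divr_gt0.
  have [N1 H1] := Hx _ r1; have [N2 H2] := Hy _ r2.
  exists (maxn N1 N2) => n hn.
  have [g1 [G1 Hg1]] := H1 n (leq_trans (leq_maxl _ _) hn).
  have [g2 [G2 Hg2]] := H2 n (leq_trans (leq_maxr _ _) hn).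
  exists (a *: g1 + g2); split; first exact: (HMs n).1.2.
  have -> : a *: x + y - (a *: g1 + g2) = a *: (x - g1) + (y - g2).
    by rewrite scalerBr opprD addrACA.
  apply: (le_lt_trans (nrD _ _)); rewrite nrZ.
  have hna := nc_ge0 a.
  have h3 : nc a * nr (x - g1) <= nc a * (r / 2 / (nc a + 1)).
    by rewrite ler_wpM2l // ltW.
  have h4 : (nc a + 1) * (r / 2 / (nc a + 1)) = r / 2.
    by field; rewrite gt_eqF // ltr_wpDl.
  have h5 : 0 <= r / 2 / (nc a + 1) by exact: ltW.
  move: h3 h4 h5 Hg1 Hg2; move: (r / 2 / (nc a + 1)) => t.
  move: (nr (x - g1)) (nr (y - g2)) => u v. move: (nc a) hna => na hna h3 h4 h5 h6 h7.
  have h8 : na * t <= r / 2 by rewrite -h4 mulrDl mul1r lerDl.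
  by rewrite [r in _ < r](splitr r); apply: ler_ltD (le_trans h3 h8) h7.
- move=> u l Hu /hconvR Hl; apply/distR => r r0.
  have r2 : 0 < r / 2 by rewrite divr_gt0.
  have [K HK] := Hl _ r2.
  have [N0 HN0] := (distR _ _).1 (Hu K) _ r2.
  exists N0 => n hn; have [g [Gg Hg]] := HN0 n hn.
  exists g; split => //.
  have := nrD (l - u K) (u K - g); rewrite addrA subrK (nrB l (u K)).
  have := HK K (leqnn K); lra.
Qed.

Lemma A N : closed_subspace ip N ->
  (sot_conv ip (fun n x => proj ip (Ms n) (proj ip N x)) (proj ip N) <->
   forall f, N f -> L f).
Proof.
move=> HN; split.
  move=> H f Nf; have := H f; rewrite (proj_id _ _ HN.1 Nf) => /hconvR Hf.
  apply/distR => r r0; have [K HK] := Hf r r0.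
  exists K => n hn; exists (proj ip (Ms n) f); split.
    exact: (proj_spec _ _ Hc (HMs n)).1.
  by rewrite nrB; apply: HK.
move=> H x; apply/hconvR => r r0.
have [Nf _] := proj_spec N x Hc HN.
have [K HK] := (distR _ _).1 (H _ Nf) r r0.
exists K => n hn; have [g [Gg Hg]] := HK n hn.
rewrite nrB; apply: le_lt_trans Hg.
apply: sq_le; rewrite ?nr_ge0 // !nr_sq.
exact: proj_min Hc (HMs n) Gg.
Qed.

Lemma B N : closed_subspace ip N ->
  (wot_conv ip (fun n x => proj ip (Ms n) (proj ip N x)) (proj ip N) <->
   forall f, N f -> L f).
Proof.
move=> HN; split.
  move=> H f Nf; have := H f f; rewrite (proj_id _ _ HN.1 Nf) => /sconvR Hf.
  apply/distR => r r0; have [K HK] := Hf (r * r) (mulr_gt0 r0 r0).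
  exists K => n hn; exists (proj ip (Ms n) f); split.
    exact: (proj_spec _ _ Hc (HMs n)).1.
  have := HK n hn.
  rewrite -opprB -proj_wot // ?ncN ?ncR //.
  rewrite ger0_norm ?q_ge0 // -nr_sq => h.
  apply: sq_lt; rewrite ?nr_ge0 ?ltW // expr2; exact: h.
move=> H; have Hs := (A _ HN).2 H.
move=> x y; apply/sconvR => r r0.
have hy := nr_ge0 y.
have r1 : 0 < r / (nr y + 1) by rewrite divr_gt0 // ltr_wpDl.
have [K HK] := (hconvR _ _).1 (Hs x) _ r1.
exists K => n hn; rewrite -ipBl.
apply: (le_lt_trans (CS _ _)).
have h1 := HK n hn.
have h4 : (nr y + 1) * (r / (nr y + 1)) = r.
  by field; rewrite gt_eqF // ltr_wpDl.
have h0 := nr_ge0 (proj ip (Ms n) (proj ip N x) - proj ip N x).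
move: h1 h4 h0 r1; move: (r / (nr y + 1)) (nr (proj ip (Ms n) (proj ip N x) - proj ip N x)) => t u.
nra.
Qed.

Lemma gen (Conv : (V -> Prop) -> Prop) (M : V -> Prop) :
  closed_subspace ip M ->
  (forall N, closed_subspace ip N -> (Conv N <-> forall f, N f -> L f)) ->
  (subspace_lim ip Ms M <->
   (Conv M /\ ~ exists N, closed_subspace ip N /\ strict_sub M N /\ Conv N)).
Proof.
move=> HM HC; split.
  move=> Hlim; split; first by apply/(HC _ HM) => f /Hlim.
  move=> [N [HN [[sMN [x [Nx nMx]]] CN]]].
  by apply: nMx; apply/Hlim; exact: (HC _ HN).1 CN x Nx.
move=> [CM nex] f; split; first exact: (HC _ HM).1 CM f.
move=> Lf; apply: NNPP => nMf; apply: nex.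
exists L; split; first exact: L_closed.
split; last by apply/(HC _ L_closed).
split; last by exists f.
exact: (HC _ HM).1 CM.
Qed.
End Main.
End Lib.

Theorem proposition4p1 (R : realType) (V : lmodType (R[i])%C)
  (ip : inner_product V) (Hcomplete : complete_ip ip)
  (Ms : nat -> V -> Prop) (M : V -> Prop)
  (HMs : forall n, closed_subspace ip (Ms n)) (HM : closed_subspace ip M) :
  (subspace_lim ip Ms M <->
     (sot_conv ip (fun n x => proj ip (Ms n) (proj ip M x)) (proj ip M) /\
      ~ exists N, closed_subspace ip N /\ strict_sub M N /\
        sot_conv ip (fun n x => proj ip (Ms n) (proj ip N x)) (proj ip N)))
  /\
  (subspace_lim ip Ms M <->
     (wot_conv ip (fun n x => proj ip (Ms n) (proj ip M x)) (proj ip M) /\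
      ~ exists N, closed_subspace ip N /\ strict_sub M N /\
        wot_conv ip (fun n x => proj ip (Ms n) (proj ip N x)) (proj ip N))).
Proof.
split.
- have h := @gen R V ip Ms HMs
    (fun N => sot_conv ip (fun n x => proj ip (Ms n) (proj ip N x)) (proj ip N)) M HM
    (@A R V ip Ms Hcomplete HMs).
  exact: h.
- have h := @gen R V ip Ms HMs
    (fun N => wot_conv ip (fun n x => proj ip (Ms n) (proj ip N x)) (proj ip N)) M HM
    (@B R V ip Ms Hcomplete HMs).
  exact: h.
Qed.
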